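(* Let $1 \le d \le n-1$ and set $c_j = \binom{n-1}{d}/\binom{n-1}{d-j}$ for $0 \le j \le d$. Then in $\mathbb{Q}[x_1,\dots,x_{n+d}]$, $$\binom{n}{d}\, x_1\cdots x_d = \sum_{j=0}^{d} (-1)^j c_j \sum_{\substack{J \subseteq \{1,\dots,n+d\},\ |J| = n\\ |J\cap\{1,\dots,d\}| = d-j}} e_n^d(x_J),$$ where $e_n^d(x_J)$ is the elementary symmetric polynomial of degree $d$ in the $n$ variables $x_i$, $i\in J$. Consequently the same identity holds over any field $K$ in which all $c_j$ are defined (e.g. $\mathrm{char}(K)=0$ or $\mathrm{char}(K)>n$). *)

(* Defs.v *)
From HB Require Import structures.
From mathcomp Require Import all_boot all_order all_algebra.
From mathcomp Require Import mpoly.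
Set Implicit Arguments. Unset Strict Implicit. Unset Printing Implicit Defensive.
Import GRing.Theory.
Local Open Scope ring_scope.

(* Variables x_1..x_{N} are indexed by 'I_N (x_{i+1} is 'X_i). *)

Definition esymJ (K : fieldType) (N : nat) (k : nat) (J : {set 'I_N}) : {mpoly K[N]} :=
  \sum_(S : {set 'I_N} | (S \subset J) && (#|S| == k)) \prod_(i in S) 'X_i.

Definition cj (K : fieldType) (n d j : nat) : K :=
  ('C(n.-1, d))%:R / ('C(n.-1, d - j))%:R.

Definition identity_holds (K : fieldType) (n d : nat) : Prop :=
  ('C(n, d))%:R *: (\prod_(i : 'I_(n + d) | (i < d)%N) 'X_i : {mpoly K[n + d]})
  = \sum_(j < d.+1)
      ((-1) ^+ j * cj K n d j) *:
        \sum_(J : {set 'I_(n + d)} | (#|J| == n) &&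
                 (#|J :&: [set i : 'I_(n + d) | (i < d)%N]| == d - j)%N)
          esymJ K d J.

(* Main.v *)
Require Import Defs.
From HB Require Import structures.
From mathcomp Require Import all_boot all_order all_algebra.
From mathcomp Require Import mpoly.
From mathcomp Require Import zify ring.
Set Implicit Arguments. Unset Strict Implicit. Unset Printing Implicit Defensive.
Import GRing.Theory.
Local Open Scope ring_scope.

Lemma ffactD (N a b : nat) : (N ^_ (a + b) = N ^_ a * (N - a) ^_ b)%N.
Proof.
elim: b => [|b IH]; first by rewrite addn0 ffactn0 muln1.
by rewrite addnS !ffactnSr IH subnDA mulnA.
Qed.

Lemma trinom (N a b : nat) : ('C(N, a) * 'C(N - a, b) = 'C(N, b) * 'C(N - b, a))%N.
Proof.
apply/eqP; rewrite -(eqn_pmul2r (fact_gt0 a)) -(eqn_pmul2r (fact_gt0 b)).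
have E1 : ('C(N, a) * 'C(N - a, b) * a`! * b`! = N ^_ (a + b))%N.
  by rewrite ffactD -!bin_ffact; ring.
have E2 : ('C(N, b) * 'C(N - b, a) * b`! * a`! = N ^_ (b + a))%N.
  by rewrite ffactD -!bin_ffact; ring.
by rewrite E1 [X in _ == X]mulnAC E2 addnC.
Qed.
Section Num.
Variable K : fieldType.

Definition Tn (M m a k : nat) : K :=
  \sum_(j < M) (-1) ^+ j * ('C(m, j) * 'C(a + j, k))%:R.

Lemma Tn_ext M m a k : (m < M)%N -> Tn M.+1 m a k = Tn M m a k.
Proof. by move=> h; rewrite /Tn big_ord_recr /= bin_small // mul0n mulr0 addr0. Qed.

Lemma Tn_k0 M m a : Tn M m a 0 = Tn M m a.+1 0.
Proof. by apply: eq_bigr => j _; rewrite !bin0. Qed.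

Lemma Tn_rec M m a k : Tn M.+1 m.+1 a k = Tn M.+1 m a k - Tn M m a.+1 k.
Proof.
rewrite /Tn big_ord_recl [X in _ = X - _]big_ord_recl /= !bin0.
under eq_bigr => i _ do rewrite binS mulnDl natrD mulrDr.
rewrite big_split /= addrA -sumrN; congr (_ + _).
apply: eq_bigr => i _; rewrite /bump /= exprS addnS addSn; ring.
Qed.

Lemma Tn_pascal M m a k : Tn M m a.+1 k.+1 = Tn M m a k.+1 + Tn M m a k.
Proof.
rewrite /Tn -big_split /=; apply: eq_bigr => i _.
by rewrite addSn binS mulnDr natrD mulrDr.
Qed.

Lemma Tn_zero m : forall M a k, (m < M)%N -> (k < m)%N -> Tn M m a k = 0.
Proof.
elim: m => [//|m IH] [//|M] a k hM hk.
rewrite Tn_rec.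
case: k hk => [_|k hk].
  rewrite Tn_ext; last by lia.
  by rewrite Tn_k0 subrr.
rewrite Tn_ext; last by lia.
rewrite Tn_pascal (IH M a k); [|lia|lia]. by rewrite addr0 subrr.
Qed.


Variables (n d : nat).
Hypothesis hd1 : (1 <= d)%N.
Hypothesis hdn : (d <= n - 1)%N.
Hypothesis hK : forall k, (k <= d)%N -> ('C(n.-1, k))%:R != 0 :> K.

Lemma coef_final s : (s <= d)%N ->
  \sum_(a < (d - s).+1) 'C(d - s, a)%:R *
     \sum_(b < (n - (d - s)).+1) 'C(n - (d - s), b)%:R *
        (if (d + a + b == n)%N then (-1) ^+ (d - (s + a)) * cj K n d (d - (s + a)) else 0)
  = if s == d then ('C(n, d))%:R else 0 :> K.
Proof.
move=> hs.
have inner : forall a : 'I_(d - s).+1,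
   \sum_(b < (n - (d - s)).+1) 'C(n - (d - s), b)%:R *
        (if (d + a + b == n)%N then (-1) ^+ (d - (s + a)) * cj K n d (d - (s + a)) else 0)
   = 'C(n - (d - s), s + a)%:R * ((-1) ^+ (d - (s + a)) * cj K n d (d - (s + a))).
  move=> a; case: (leqP (d + a) n) => h.
    rewrite (bigD1 (inord (n - d - a))) //= inordK; last by lia.
    rewrite ifT; last by apply/eqP; lia.
    rewrite big1 ?addr0.
      have -> : (n - d - a = (n - (d - s)) - (s + a))%N by lia.
      by rewrite bin_sub //; lia.
    move=> b hb; rewrite ifF ?mulr0 //; apply/negbTE; apply/eqP => e.
    move/eqP: hb; apply; apply/val_inj => /=; rewrite inordK; lia.
  rewrite big1; last first.
    by move=> b _; rewrite ifF ?mulr0 //; apply/negbTE; apply/eqP; lia.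
  by rewrite bin_small ?mul0r //; lia.
under eq_bigr => a _ do rewrite inner.
rewrite (reindex_inj rev_ord_inj) /=.
have term : forall j : 'I_(d - s).+1,
  'C(d - s, rev_ord j)%:R * ('C(n - (d - s), s + rev_ord j)%:R *
     ((-1) ^+ (d - (s + rev_ord j)) * cj K n d (d - (s + rev_ord j))))
  = (-1) ^+ j * 'C(d - s, j)%:R * 'C(n - (d - s), d - j)%:R * cj K n d j :> K.
  move=> j; have hj := ltn_ord j; rewrite /= subSS.
  rewrite bin_sub; last by lia.
  have -> : (s + (d - s - j) = d - j)%N by lia.
  have -> : (d - (d - j) = j)%N by lia.
  ring.
under eq_bigr => j _ do rewrite term.
case: eqP => [->|hsd].
  rewrite subnn big_ord1 /= subn0 bin0 /cj subn0 divff; last by apply: hK.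
  by rewrite expr0 !mul1r mulr1.
have hm : (1 <= d - s)%N by lia.
set P := 'C(n.-1, d - s - 1).
have hP : (P%:R != 0 :> K) by apply: hK; lia.
apply: (mulIf hP).
rewrite mul0r mulr_suml.
transitivity ('C(n.-1, d)%:R * Tn (d - s).+1 (d - s) (n.-1 - d) (d - s - 1)); last first.
  by rewrite Tn_zero ?mulr0 //; lia.
rewrite /Tn mulr_sumr; apply: eq_bigr => j _.
have hj := ltn_ord j.
have E := congr1 (fun x : nat => x%:R : K) (trinom n.-1 (d - j) (d - s - 1)).
rewrite /= !natrM in E.
have e1 : (n.-1 - (d - s - 1) = n - (d - s))%N by lia.
rewrite e1 in E.
have e2 : (n.-1 - (d - j) = n.-1 - d + j)%N by lia.
rewrite e2 in E.
rewrite -/P in E.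
have hY : ('C(n.-1, d - j))%:R != 0 :> K by apply: hK; lia.
have Ec : ('C(n - (d - s), d - j))%:R = 'C(n.-1, d - j)%:R * 'C(n.-1 - d + j, d - s - 1)%:R / P%:R :> K.
  by rewrite E mulrAC divff // mul1r.
rewrite Ec /cj natrM; field.
by rewrite hY hP.
Qed.

End Num.
Section Sets.
Variable K : fieldType.
Variable T : finType.

Lemma sum_card (W : {set T}) (h : nat -> K) :
  \sum_(A : {set T} | A \subset W) h #|A| = \sum_(a < #|W|.+1) ('C(#|W|, a))%:R * h a.
Proof.
transitivity (\sum_(A : {set T} | A \subset W) \sum_(a < #|W|.+1 | #|A| == a) h a).
  apply: eq_bigr => A sAW.
  have hA : (#|A| <= #|W|)%N by apply: subset_leq_card.
  rewrite (big_pred1 (inord #|A|)) ?inordK //.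
  move=> a /=; apply/eqP/eqP => [->|->]; first by apply/val_inj; rewrite /= inordK.
  by rewrite inordK.
rewrite (exchange_big_dep xpredT) //=; apply: eq_bigr => a _.
rewrite sumr_const -cards_draws mulr_natl.
congr (_ *+ _); apply: eq_card => A; by rewrite !inE.
Qed.

Lemma sum_split (S D : {set T}) (F : {set T} -> K) :
  \sum_(J : {set T} | S \subset J) F J =
  \sum_(A : {set T} | A \subset D :\: S) \sum_(B : {set T} | B \subset ~: D :\: S) F (S :|: A :|: B).
Proof.
rewrite pair_big /=.
rewrite (reindex_onto (fun p : {set T} * {set T} => S :|: p.1 :|: p.2)
   (fun J : {set T} => (J :&: (D :\: S), J :&: (~: D :\: S)))) /=; last first.
  move=> J /subsetP sJ; apply/setP => x; rewrite !inE.
  by move: (sJ x); case: (x \in S); case: (x \in J); case: (x \in D) => //= ->.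
apply: eq_big => [[A B]|//] /=.
apply/andP/andP => [[_ /eqP [<- <-]]|[/subsetP hA /subsetP hB]].
  by split; apply: subsetIr.
split; first by rewrite -setUA subsetUl.
apply/eqP; congr (_, _); apply/setP => x; rewrite !inE;
  move: (hA x) (hB x); rewrite !inE;
  case: (x \in A); case: (x \in B); case: (x \in S); case: (x \in D) => //=;
  by move=> h1 h2; (try have := h1 isT); (try have := h2 isT).
Qed.

End Sets.

Lemma cardsU0 (T : finType) (X Y : {set T}) : X :&: Y = set0 -> #|X :|: Y| = (#|X| + #|Y|)%N.
Proof. by rewrite cardsU => ->; rewrite cards0 subn0. Qed.

Lemma card_parts (T : finType) (S D A B : {set T}) :
  A \subset D :\: S -> B \subset ~: D :\: S ->
  #|S :|: A :|: B| = (#|S| + #|A| + #|B|)%N /\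
  #|(S :|: A :|: B) :&: D| = (#|S :&: D| + #|A|)%N.
Proof.
move=> /subsetP hA /subsetP hB.
have tac : forall x, (x \in A -> x \in D :\: S) -> (x \in B -> x \in ~: D :\: S) -> True by [].
split.
  rewrite cardsU0; last first.
    apply/setP => x; rewrite !inE; move: (hA x) (hB x); rewrite !inE;
    case: (x \in A); case: (x \in B); case: (x \in S); case: (x \in D) => //=;
    by move=> h1 h2; (try have := h1 isT); (try have := h2 isT).
  rewrite cardsU0 //.
  apply/setP => x; rewrite !inE; move: (hA x) (hB x); rewrite !inE;
  case: (x \in A); case: (x \in B); case: (x \in S); case: (x \in D) => //=;
  by move=> h1 h2; (try have := h1 isT); (try have := h2 isT).
have -> : (S :|: A :|: B) :&: D = (S :&: D) :|: A.
  apply/setP => x; rewrite !inE; move: (hA x) (hB x); rewrite !inE;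
  case: (x \in A); case: (x \in B); case: (x \in S); case: (x \in D) => //=;
  by move=> h1 h2; (try have := h1 isT); (try have := h2 isT).
rewrite cardsU0 //.
apply/setP => x; rewrite !inE; move: (hA x) (hB x); rewrite !inE;
case: (x \in A); case: (x \in B); case: (x \in S); case: (x \in D) => //=;
by move=> h1 h2; (try have := h1 isT); (try have := h2 isT).
Qed.

Lemma cardD (n d : nat) : #|[set i : 'I_(n + d) | (i < d)%N]| = d.
Proof.
have -> : [set i : 'I_(n + d) | (i < d)%N] = [set widen_ord (leq_addl n d) i | i : 'I_d].
  apply/setP => x; rewrite !inE; apply/idP/imsetP => [hx|[y _ ->]]; last by rewrite /= ltn_ord.
  by exists (Ordinal hx) => //; apply/val_inj.
by rewrite card_imset ?card_ord // => x y /(congr1 val) /= e; apply/val_inj.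
Qed.

Lemma coef_S (K : fieldType) (n d : nat) (hd1 : (1 <= d)%N) (hdn : (d <= n - 1)%N)
  (hK : forall k, (k <= d)%N -> ('C(n.-1, k))%:R != 0 :> K)
  (S : {set 'I_(n + d)}) (hS : #|S| == d) :
  \sum_(j < d.+1) \sum_(J : {set 'I_(n + d)} | ((#|J| == n) &&
        (#|J :&: [set i : 'I_(n + d) | (i < d)%N]| == d - j)%N) && ((S \subset J) && (#|S| == d)))
       ((-1) ^+ j * cj K n d j)
  = if S == [set i : 'I_(n + d) | (i < d)%N] then ('C(n, d))%:R else 0.
Proof.
set D := [set i : 'I_(n + d) | (i < d)%N].
have cD : #|D| = d := cardD n d.
rewrite (exchange_big_dep (fun J : {set 'I_(n + d)} => (#|J| == n) && (S \subset J))) /=; last first.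
  by move=> j J _ /andP[/andP[-> _] /andP[-> _]].
transitivity (\sum_(J : {set 'I_(n + d)} | (#|J| == n) && (S \subset J))
   ((-1) ^+ (d - #|J :&: D|) * cj K n d (d - #|J :&: D|))).
  apply: eq_bigr => J /andP[hJ sSJ].
  have hle : (#|J :&: D| <= d)%N by rewrite -[X in (_ <= X)%N]cD subset_leq_card // subsetIr.
  rewrite (big_pred1 (inord (d - #|J :&: D|))) ?inordK //; last first.
    move=> j /=; rewrite hJ sSJ hS /= andbT; have := ltn_ord j.
    move=> hj; have hi : (d - #|J :&: D| < d.+1)%N by lia.
    apply/eqP/eqP => [e|->].
      by apply/val_inj; rewrite /= inordK //; lia.
    by rewrite inordK // subKn.
  by lia.
rewrite big_mkcondl /= (sum_split S D).
pose s := #|S :&: D|.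
have cW1 : #|D :\: S| = (d - s)%N by rewrite cardsD setIC cD.
have cW2 : #|~: D :\: S| = (n - (d - s))%N.
  have h1 : #|~: D| = n by have := cardsC D; rewrite cD card_ord; lia.
  have h2 : #|~: D :&: S| = (#|S| - s)%N by rewrite setIC -setDE cardsD.
  rewrite cardsD h1 h2 (eqP hS); have : (s <= d)%N by rewrite -(eqP hS) subset_leq_card // subsetIl.
  lia.
transitivity (\sum_(A : {set 'I_(n + d)} | A \subset D :\: S)
   \sum_(B : {set 'I_(n + d)} | B \subset ~: D :\: S)
     (if (d + #|A| + #|B| == n)%N then (-1) ^+ (d - (s + #|A|)) * cj K n d (d - (s + #|A|)) else 0)).
  apply: eq_bigr => A hA; apply: eq_bigr => B hB.
  by have [-> ->] := card_parts hA hB; rewrite (eqP hS).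
transitivity (\sum_(A : {set 'I_(n + d)} | A \subset D :\: S)
   \sum_(b < #|~: D :\: S|.+1) 'C(#|~: D :\: S|, b)%:R *
     (if (d + #|A| + b == n)%N then (-1) ^+ (d - (s + #|A|)) * cj K n d (d - (s + #|A|)) else 0)).
  apply: eq_bigr => A hA.
  exact: (sum_card (~: D :\: S) (fun b => if (d + #|A| + b == n)%N then (-1) ^+ (d - (s + #|A|)) * cj K n d (d - (s + #|A|)) else 0)).
rewrite (sum_card (D :\: S) (fun a => \sum_(b < #|~: D :\: S|.+1) 'C(#|~: D :\: S|, b)%:R *
     (if (d + a + b == n)%N then (-1) ^+ (d - (s + a)) * cj K n d (d - (s + a)) else 0))).
rewrite cW1 cW2 coef_final //; last by rewrite -(eqP hS) subset_leq_card // subsetIl.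
congr (if _ then _ else _).
apply/eqP/eqP => [e|e]; last by rewrite /s e setIid cD.
have es : #|S :&: D| = d := e.
have e1 : S :&: D = S by apply/eqP; rewrite eqEcard subsetIl es (eqP hS) leqnn.
have e2 : S :&: D = D by apply/eqP; rewrite eqEcard subsetIr es cD leqnn.
by rewrite -e1 e2.
Qed.

Lemma scal2 (K : fieldType) (V : lmodType K) (I J : finType) (P : pred I) (Q : I -> pred J)
  (F : I -> J -> K) (v : V) :
  (\sum_(i | P i) \sum_(j | Q i j) F i j) *: v = \sum_(i | P i) \sum_(j | Q i j) F i j *: v.
Proof. by rewrite scaler_suml; apply: eq_bigr => i _; rewrite scaler_suml. Qed.

Lemma scal2r (K : fieldType) (V : lmodType K) (I J : finType) (P : pred I) (Q : I -> pred J)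
  (F : I -> J -> V) (c : K) :
  c *: (\sum_(i | P i) \sum_(j | Q i j) F i j) = \sum_(i | P i) \sum_(j | Q i j) c *: F i j.
Proof. by rewrite scaler_sumr; apply: eq_bigr => i _; rewrite scaler_sumr. Qed.

Lemma main_K (K : fieldType) (n d : nat) (hd1 : (1 <= d)%N) (hdn : (d <= n - 1)%N)
  (hK : forall k, (k <= d)%N -> ('C(n.-1, k))%:R != 0 :> K) :
  identity_holds K n d.
Proof.
rewrite /identity_holds /esymJ.
set D := [set i : 'I_(n + d) | (i < d)%N].
have -> : \prod_(i : 'I_(n + d) | (i < d)%N) 'X_i = \prod_(i in D) ('X_i : {mpoly K[n + d]}).
  by apply: eq_bigl => i; rewrite inE.
symmetry.
transitivity (\sum_(S : {set 'I_(n + d)} | #|S| == d)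
  (\sum_(j < d.+1) \sum_(J : {set 'I_(n + d)} | ((#|J| == n) &&
        (#|J :&: D| == d - j)%N) && ((S \subset J) && (#|S| == d)))
       ((-1) ^+ j * cj K n d j)) *: \prod_(i in S) ('X_i : {mpoly K[n + d]})).
  under [RHS]eq_bigr => S _ do rewrite scal2.
  rewrite [RHS]exchange_big; apply: eq_bigr => j _.
  rewrite scal2r.
  rewrite (exchange_big_dep (fun S : {set 'I_(n + d)} => #|S| == d)) //=.
  by move=> J S _ /andP[].
under [LHS]eq_bigr => S hS do rewrite (coef_S hd1 hdn hK hS).
rewrite (bigD1 D) /=; last by rewrite cardD.
rewrite eqxx [X in _ + X]big1 ?addr0 //.
by move=> S /andP[_ /negbTE ->]; rewrite scale0r.
Qed.

Unset Implicit Arguments.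
Set Strict Implicit.
Theorem mainTheorem10 (n d : nat) (hd1 : (1 <= d)%N) (hdn : (d <= n - 1)%N) :
  identity_holds rat n d /\
  (forall K : fieldType,
     (forall j : nat, (j <= d)%N -> ('C(n.-1, d - j))%:R != 0 :> K) ->
     identity_holds K n d).
Proof.
have gen : forall K : fieldType,
     (forall j : nat, (j <= d)%N -> ('C(n.-1, d - j))%:R != 0 :> K) ->
     identity_holds K n d.
  move=> K hK0; apply: main_K => // k hk.
  have := hK0 (d - k)%N (leq_subr _ _); by rewrite subKn.
split => //; apply: gen => j hj.
rewrite Num.Theory.pnatr_eq0 -lt0n bin_gt0; lia.
Qed.
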